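(* Let $q$ be a prime power, $n=q^2-1$, and let $x\in\{1,\ldots,n-1\}$ be the minimal representative of its cyclotomic coset $I_x$, with $q$-adic representation $x=a_0+a_1q$, $0\le a_0,a_1<q$. Then $I_x$ is a symmetric coset if and only if $a_0+a_1=q-1$, and $I_x$ is an SR-asymmetric coset if and only if $a_0+a_1>q-1$.
   Context: Identify $\mathbb{Z}_n$ with $\{0,\ldots,n-1\}$. The cyclotomic coset of $x$ with respect to $q$ is $I_x=\{x,\,xq\bmod n\}$; its minimal representative is its least element. The (Euclidean) reciprocal coset of $I_x$ is $I_{n-x}$. $I_x$ is symmetric if $I_{n-x}=I_x$, and asymmetric otherwise. If $I_x$ is asymmetric with reciprocal coset $I_y$, where $x,y$ are the minimal representatives and $x<y$, then $I_x$ is the FR-asymmetric coset and $I_y$ the SR-asymmetric coset of the pair. *)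

(* Defs.v *)
From mathcomp Require Import all_boot.
Set Implicit Arguments. Unset Strict Implicit. Unset Printing Implicit Defensive.

Definition prime_power (q : nat) : Prop := exists p k, prime p /\ 0 < k /\ q = p ^ k.

(* Z_n identified with {0,...,n-1}; the cyclotomic coset I_x = {x, x q mod n}. *)
Definition coset (n q x : nat) : seq nat := [:: x %% n; (x * q) %% n].

Definition minrep (n q x : nat) : nat := minn (x %% n) ((x * q) %% n).

(* the reciprocal coset of I_x is I_{n-x} *)
Definition symmetric_coset (n q x : nat) : Prop :=
  coset n q (n - x) =i coset n q x.

Definition asymmetric_coset (n q x : nat) : Prop := ~ symmetric_coset n q x.

Definition SR_asymmetric_coset (n q x : nat) : Prop :=
  asymmetric_coset n q x /\ minrep n q (n - x) < minrep n q x.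

(* Main.v *)
Require Import Defs.
From mathcomp Require Import all_boot.
From mathcomp Require Import zify.

Lemma coset_digits (q c0 c1 : nat) : 1 < q -> c0 < q -> c1 < q ->
  0 < c0 + c1 * q < q ^ 2 - 1 ->
  coset (q ^ 2 - 1) q (c0 + c1 * q) = [:: c0 + c1 * q; c1 + c0 * q].
Proof.
move=> q1 h0 h1 /andP[hp hn].
have hq2 : q ^ 2 = (q ^ 2 - 1) + 1 by rewrite subnK // expn_gt0 ltnW.
have hsm : c1 + c0 * q < q ^ 2 - 1.
  have : c1 + c0 * q <= q ^ 2 - 1 by rewrite expnS expn1; nia.
  rewrite leq_eqVlt => /orP[/eqP E|//].
  exfalso. have e1 : c0 = q - 1 by rewrite expnS expn1 in E; nia.
  have e2 : c1 = q - 1 by rewrite expnS expn1 in E; nia.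
  move: hn; rewrite e1 e2 expnS expn1; nia.
rewrite /coset (modn_small hn).
have -> : (c0 + c1 * q) * q = c1 * (q ^ 2 - 1) + (c1 + c0 * q).
  have : c1 * q ^ 2 = c1 * (q ^ 2 - 1) + c1 by rewrite {1}hq2 mulnDr muln1.
  rewrite expnS expn1 => E; nia.
by rewrite modnMDl (modn_small hsm).
Qed.

Lemma digits_uniq (q c0 c1 d0 d1 : nat) : c0 < q -> d0 < q ->
  c0 + c1 * q = d0 + d1 * q -> c0 = d0 /\ c1 = d1.
Proof.
move=> h0 h1 E.
have qp : 0 < q by case: q h0 {E h1}.
have Em : (c0 + c1 * q) %% q = (d0 + d1 * q) %% q by rewrite E.
have Ed : (c0 + c1 * q) %/ q = (d0 + d1 * q) %/ q by rewrite E.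
rewrite ![_ + _ * q]addnC !modnMDl !modn_small // in Em.
rewrite ![_ + _ * q]addnC !divnMDl // !divn_small // !addn0 in Ed.
by [].
Qed.

Lemma main_aux (q x a0 a1 : nat) : 1 < q ->
  0 < x < q ^ 2 - 1 -> x = minrep (q ^ 2 - 1) q x ->
  x = a0 + a1 * q -> a0 < q -> a1 < q ->
  (symmetric_coset (q ^ 2 - 1) q x <-> a0 + a1 = q - 1) /\
  (SR_asymmetric_coset (q ^ 2 - 1) q x <-> a0 + a1 > q - 1).
Proof.
move=> q1 hx hmin hxd h0 h1; subst x.
have hq : q ^ 2 = q * q by rewrite expnS expn1.
have hnx : q ^ 2 - 1 - (a0 + a1 * q) = (q - 1 - a0) + (q - 1 - a1) * q.
  rewrite hq; nia.
have hb : 0 < (q - 1 - a0) + (q - 1 - a1) * q < q ^ 2 - 1.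
  rewrite -hnx; lia.
have Cx := coset_digits _ _ _ q1 h0 h1 hx.
have hb0 : q - 1 - a0 < q by lia.
have hb1 : q - 1 - a1 < q by lia.
have Cy := coset_digits _ _ _ q1 hb0 hb1 hb.
case: Cx => Ex1 Ex2.
case: Cy => Ey1 Ey2.
have Hsym : symmetric_coset (q ^ 2 - 1) q (a0 + a1 * q) <-> a0 + a1 = q - 1.
  rewrite /symmetric_coset /coset hnx Ex1 Ex2 Ey1 Ey2; clear Ex1 Ex2 Ey1 Ey2 hx hb hnx hq; split.
  - move=> H.
    have : a0 + a1 * q \in [:: q - 1 - a0 + (q - 1 - a1) * q; q - 1 - a1 + (q - 1 - a0) * q].
      by rewrite H mem_head.
    rewrite !inE => /orP[/eqP E|/eqP E].
    + have [e1 e2] := digits_uniq _ _ _ _ _ h0 hb0 E; lia.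
    + have [e1 e2] := digits_uniq _ _ _ _ _ h0 hb1 E; lia.
  - move=> hs.
    have e1 : q - 1 - a0 = a1 by lia.
    have e2 : q - 1 - a1 = a0 by lia.
    by rewrite e1 e2 => z; rewrite !inE orbC.
move: hmin; rewrite /SR_asymmetric_coset /asymmetric_coset /minrep /coset hnx.
rewrite Ex1 Ex2 Ey1 Ey2 => hmin; clear Ex1 Ex2 Ey1 Ey2 hx hb hnx hq.
have hle : a0 + a1 * q <= a1 + a0 * q by rewrite {1}hmin geq_minr.
have la : a1 <= a0.
  rewrite leqNgt; apply/negP => lt.
  have : a0.+1 * q <= a1 * q by rewrite leq_mul2r lt orbT.
  nia.
have hm2 : q - 1 - a1 + (q - 1 - a0) * q <= q - 1 - a0 + (q - 1 - a1) * q.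
  have : q - 1 - a0 <= q - 1 - a1 by lia.
  nia.
rewrite -hmin (minn_idPr hm2).
split; first exact: Hsym.
split.
- move=> [ns lt].
  have ns' : a0 + a1 <> q - 1 by move=> E; apply: ns; apply/Hsym.
  rewrite ltnNge; apply/negP => le.
  have : a1 + 1 <= q - 1 - a0 by lia.
  move=> h; have : (a1 + 1) * q <= (q - 1 - a0) * q by rewrite leq_mul2r h orbT.
  nia.
- move=> gt; split.
  + by move/Hsym; lia.
  + have : q - 1 - a0 + 1 <= a1 by lia.
    move=> h; have : (q - 1 - a0 + 1) * q <= a1 * q by rewrite leq_mul2r h orbT.
    nia.
Qed.


Theorem mainTheorem6 (q n x a0 a1 : nat) :
  prime_power q -> n = q ^ 2 - 1 ->
  0 < x < n -> x = minrep n q x ->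
  x = a0 + a1 * q -> a0 < q -> a1 < q ->
  (symmetric_coset n q x <-> a0 + a1 = q - 1) /\
  (SR_asymmetric_coset n q x <-> a0 + a1 > q - 1).
Proof.
move=> [p [k [pp [k0 ->]]]] ->.
apply: main_aux.
by rewrite -{1}(expn0 p) ltn_exp2l ?prime_gt1.
Qed.
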